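(* Let $M\in\mathrm{Mat}(d,\mathbb{Z})$ and $n\in\mathbb{N}$, and consider the map $x\mapsto Mx \bmod n$ on $\tilde L_n=(\mathbb{Z}/n\mathbb{Z})^d$. Then for every periodic point $y$ of this map, the pretail graph of $y$ is isomorphic (as a directed graph) to the pretail graph of the fixed point $0$. Reversing all edge directions of the pretail graph of $0$ yields a rooted tree with root $0$, and this tree is trivial (consists of the single vertex $0$) if and only if $M$ is invertible on $\tilde L_n$.
   Context: A point $y\in\tilde L_n$ is periodic if $M^k y\equiv y \pmod n$ for some $k\ge1$. Given a periodic point $y$, a finite set of iterates $\{x, Mx, \dots, M^j x = y\}$ (mod $n$) is called a pretail of $y$ if $y$ is the only periodic point in it; $j$ is its length. The pretail graph of $y$ is the directed graph obtained by combining all pretails of $y$: its vertices are the points of all pretails of $y$, with a directed edge $z\to Mz$ for every vertex $z\neq y$ (so no edge leaves $y$). *)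

(* Defs.v *)
From mathcomp Require Import all_boot all_order all_algebra.
Set Implicit Arguments. Unset Strict Implicit. Unset Printing Implicit Defensive.
Import GRing.Theory Num.Theory.

(* Points of L_n = (Z/nZ)^d, coordinates represented by 'I_n (requires 0 < n). *)
Definition pt (d n : nat) := {ffun 'I_d -> 'I_n}.

Definition pt0 (d n : nat) (hn : 0 < n) : pt d n := [ffun _ => Ordinal hn].

(* The map x |-> M x mod n. The int (M x)_i is reduced mod n (nonneg. residue),
   then taken as a nat (the extra nat %% n is the identity, it only provides the bound). *)
Definition Mmap (d n : nat) (hn : 0 < n) (M : 'M[int]_d) (x : pt d n) : pt d n :=
  [ffun i => Ordinal (ltn_pmod
     (absz ((\sum_(j < d) M i j * ((x j : nat)%:Z)) %% (n%:Z))%Z) hn)].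

Section Dyn.
Variable T : finType.
Variable f : T -> T.

Definition periodic (y : T) : Prop := exists k, 0 < k /\ iter k f y = y.

Definition in_pretail (y x : T) : Prop :=
  exists j, iter j f x = y /\ forall i, i < j -> ~ periodic (iter i f x).

Definition pretail_V (y : T) : T -> Prop := in_pretail y.

Definition pretail_E (y : T) : T -> T -> Prop :=
  fun z w => pretail_V y z /\ z <> y /\ w = f z.

End Dyn.

Definition digraph_iso (T : Type) (V1 : T -> Prop) (E1 : T -> T -> Prop)
  (V2 : T -> Prop) (E2 : T -> T -> Prop) : Prop :=
  exists phi : T -> T,
    [/\ forall u v, V1 u -> V1 v -> phi u = phi v -> u = v,
        (forall w, V2 w <-> exists2 u, V1 u & phi u = w) &
        (forall u v, V1 u -> V1 v -> (E1 u v <-> E2 (phi u) (phi v)))].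

Definition rev_rel (T : Type) (E : T -> T -> Prop) : T -> T -> Prop :=
  fun u v => E v u.

Fixpoint walk (T : Type) (E : T -> T -> Prop) (x : T) (p : seq T) : Prop :=
  match p with
  | [::] => True
  | y :: q => E x y /\ walk E y q
  end.

Definition rooted_tree (T : Type) (V : T -> Prop) (E : T -> T -> Prop) (r : T) : Prop :=
  [/\ V r,
      (forall u v, E u v -> V u /\ V v) &
      (forall v, V v ->
        (exists p, walk E r p /\ last r p = v) /\
        (forall p q, walk E r p -> last r p = v ->
                     walk E r q -> last r q = v -> p = q))].

(* Main.v *)
From HB Require Import structures.
Require Import Defs.
From mathcomp Require Import all_boot all_order all_algebra zify.
Set Implicit Arguments. Unset Strict Implicit. Unset Printing Implicit Defensive.
Import GRing.Theory.
Local Open Scope ring_scope.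

Section Gen.
Variable V : finZmodType.
Variable f : V -> V.
Hypothesis fD : forall x y, f (x + y) = f x + f y.

Lemma f0 : f 0 = 0.
Proof. by have := congr1 (fun z => z - f 0) (fD 0 0); rewrite /= addr0 subrr addrK. Qed.
Lemma fB x y : f (x - y) = f x - f y.
Proof. by apply/eqP; rewrite -(addrK (f y) (f (x - y))) -fD subrK. Qed.

Lemma itD k x y : iter k f (x + y) = iter k f x + iter k f y.
Proof. by elim: k => //= k IH; rewrite IH fD. Qed.
Lemma it0 k : iter k f 0 = 0.
Proof. by elim: k => //= k ->; rewrite f0. Qed.
Lemma itB k x y : iter k f (x - y) = iter k f x - iter k f y.
Proof. by elim: k => //= k IH; rewrite IH fB. Qed.
Lemma itC k m x : iter k f (iter m f x) = iter m f (iter k f x).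
Proof. by rewrite -!iterD addnC. Qed.

Lemma idem_pow : exists e, (0 < e)%N /\ forall x, iter e f (iter e f x) = iter e f x.
Proof.
pose c := #|{ffun V -> V}|.
pose g (k : 'I_c.+1) := [ffun x => iter k f x].
have : ~~ injectiveb g.
  apply/negP => /injectiveP inj; have := leq_card _ inj.
  by rewrite card_ord ltnn.
case/injectivePn => i [j] nij gij.
have key : forall a b : 'I_c.+1, (a < b)%N -> g a = g b -> exists e, (0 < e)%N /\ forall x, iter e f (iter e f x) = iter e f x.
  move=> a b ab gab.
  have Hab : forall x, iter b f x = iter a f x.
    by move=> x; have := congr1 (fun h : {ffun V -> V} => h x) gab; rewrite !ffunE.
  set p := (b - a)%N.
  have pos : (0 < p)%N by rewrite subn_gt0.
  have step : forall m y, (a <= m)%N -> iter (m + p) f y = iter m f y.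
    move=> m y am.
    have -> : (m + p = (m - a) + b)%N by rewrite /p; lia.
    by rewrite iterD Hab -iterD subnK.
  have per : forall m t x, (a <= m)%N -> iter (m + t * p) f x = iter m f x.
    move=> m t x am; elim: t => [|t IH]; first by rewrite mul0n addn0.
    have -> : (m + t.+1 * p = (m + t * p) + p)%N by rewrite mulSn; lia.
    by rewrite step ?IH //; lia.
  exists (p * a.+1)%N; split; first by rewrite muln_gt0 pos.
  move=> x; rewrite -iterD; have h := per (p * a.+1)%N a.+1 x.
  rewrite (mulnC a.+1) in h; apply: h; nia.
case: (ltngtP i j) => h.
- exact: key h gij.
- exact: key h (esym gij).
- by move: nij; rewrite (val_inj h) eqxx.
Qed.

Section Main.
Variable e : nat.
Hypothesis epos : (0 < e)%N.
Hypothesis He : forall x, iter e f (iter e f x) = iter e f x.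

Let E x := iter e f x.
Let N x := x - E x.

Lemma itE k x : (0 < k)%N -> iter (k * e) f x = E x.
Proof.
elim: k => // k IH _; case: k IH => [|k] IH; first by rewrite mul1n.
by rewrite mulSn iterD IH.
Qed.

Lemma perE y : periodic f y <-> E y = y.
Proof.
split=> [[k [kp hk]]|h]; last by exists e.
have ht : forall t, iter (t * k) f y = y.
  by elim=> // t IH; rewrite mulSn iterD IH hk.
by rewrite -(itE y kp) mulnC ht.
Qed.

Lemma EN x : E (N x) = 0.
Proof. by rewrite /N /E itB He subrr. Qed.
Lemma NN x : N (N x) = N x.
Proof. by rewrite {1}/N EN subr0. Qed.
Lemma itN i x : N (iter i f x) = iter i f (N x).
Proof. by rewrite /N /E itB itC. Qed.
Lemma Nf x : N (f x) = f (N x).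
Proof. exact: (itN 1). Qed.

Lemma it_periodic i x : periodic f (iter i f x) <-> iter i f (N x) = 0.
Proof.
rewrite perE -itN /N; split=> [->|/eqP]; first by rewrite subrr.
by rewrite subr_eq0 => /eqP <-.
Qed.

Lemma itjy y j : E y = y -> iter (j * e) f y = y.
Proof. by case: j => [//|j] h; rewrite itE. Qed.

Lemma Vchar y x : pretail_V f y x <->
  exists j, iter j f x = y /\ (forall i, (i < j)%N -> iter i f (N x) <> 0).
Proof.
split=> [[j [h1 h2]]|[j [h1 h2]]]; exists j; split=> // i lt.
  by move=> h0; apply: (h2 i lt); apply/it_periodic.
by move=> /it_periodic; apply: h2.
Qed.

Lemma depth a j k : iter j f a = 0 -> (forall i, (i < j)%N -> iter i f a <> 0) ->
  iter k f a = 0 -> (forall i, (i < k)%N -> iter i f a <> 0) -> j = k.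
Proof.
move=> h1 h2 h3 h4; case: (ltngtP j k) => // h.
  by have := h4 j h.
by have := h2 k h.
Qed.

Section Y.
Variable y : V.
Hypothesis Py : E y = y.

Lemma wit_nil u j : iter j f u = y -> iter j f (N u) = 0.
Proof. by move=> h; apply/it_periodic; rewrite h; apply/perE. Qed.

Lemma Ninj u v : pretail_V f y u -> pretail_V f y v -> N u = N v -> u = v.
Proof.
move=> /Vchar [j [hu1 hu2]] /Vchar [k [hv1 hv2]] hN.
have jk : j = k.
  by apply: (depth (wit_nil hu1) hu2); rewrite hN; [exact: wit_nil hv1 | exact: hv2].
subst k.
have key : forall w, iter j f w = y -> E w = iter (j * e - j) f y.
  move=> w hw; have EE : E (E w) = E w by rewrite /E He.
  rewrite -{1}(itjy j EE) -{1}(subnK (leq_pmulr j epos)) iterD.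
  by rewrite /E (itC j e w) hw; have := Py; rewrite /E => ->.
rewrite -[u](subrK (E u)) -[v](subrK (E v)) -/(N u) -/(N v) hN.
by rewrite (key u hu1) (key v hv1).
Qed.

Lemma VN u : pretail_V f y u -> pretail_V f 0 (N u).
Proof.
move=> /Vchar [j [h1 h2]]; apply/Vchar; exists j; split; first exact: wit_nil h1.
by move=> i; rewrite NN; apply: h2.
Qed.

Lemma L1 u : pretail_V f y u -> (u = y <-> N u = 0).
Proof.
move=> hu; split=> [->|h]; first by rewrite /N Py subrr.
move: hu => /Vchar [[|j] [h1 h2]]; first by [].
by have := h2 0%N isT; rewrite /= h.
Qed.

Lemma L2 u : pretail_V f y u -> u <> y -> pretail_V f y (f u).
Proof.
move=> hu; move: (hu) => /Vchar [[|j] [h1 h2]] uy; first by [].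
apply/Vchar; exists j; split; first by rewrite -iterSr.
by move=> i lt; rewrite Nf -iterSr; apply: h2.
Qed.

Lemma Vsurj w : pretail_V f 0 w -> exists2 u, pretail_V f y u & N u = w.
Proof.
move=> /Vchar [j [h1 h2]].
have Ew : E w = 0.
  case: j h1 h2 => [|j] h1 h2; first by rewrite /= in h1; rewrite h1 /E it0.
  rewrite -(itE w (isT : (0 < j.+1)%N)) -(subnK (leq_pmulr j.+1 epos)) iterD h1.
  exact: it0.
have Nw : N w = w by rewrite /N Ew subr0.
set b := iter (j * e - j) f y.
have Eb : E b = b by rewrite /b /E itC -/(E y) Py.
have NU : N (w + b) = w by rewrite /N /E itD -/(E w) -/(E b) Ew Eb add0r addrK.
exists (w + b) => //; apply/Vchar; exists j; split.
  rewrite itD h1 add0r /b -iterD subnKC ?leq_pmulr //; exact: itjy.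
by move=> i; rewrite NU -Nw; apply: h2.
Qed.

Lemma iso : digraph_iso (pretail_V f y) (pretail_E f y) (pretail_V f 0) (pretail_E f 0).
Proof.
exists N; split.
- by move=> u v hu hv; apply: Ninj.
- move=> w; split; first exact: Vsurj.
  by case=> u hu <-; apply: VN.
- move=> u v hu hv; split.
    case=> _ [uy ->]; split; first exact: VN.
    split; last exact: Nf.
    by move=> /(L1 hu).
  case=> _ [nz hN]; split=> //; split; first by move=> /(L1 hu).
  apply: Ninj => //; first by apply: L2 => // /(L1 hu).
  by rewrite Nf.
Qed.
End Y.

Lemma walk_rcons (R : V -> V -> Prop) x p z :
  walk R x (rcons p z) <-> walk R x p /\ R (last x p) z.
Proof.
elim: p x => [|a p IH] x /=; first by split=> [[]|[]].
rewrite IH; split=> [[h [h1 h2]]|[[h h1] h2]] //.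
Qed.

Arguments walk_rcons {R x p z}.

Lemma E0 : E 0 = 0.
Proof. exact: it0. Qed.

Lemma per0 : periodic f 0.
Proof. by apply/perE; exact: E0. Qed.

Lemma uniq_walk p q v : walk (rev_rel (pretail_E f 0)) 0 p -> last 0 p = v ->
  walk (rev_rel (pretail_E f 0)) 0 q -> last 0 q = v -> p = q.
Proof.
elim/last_ind: p q v => [|p a IH] q v.
  move=> _ /= <-; case/lastP: q => [//|q b] /walk_rcons [_ [_ [nz _]]].
  by rewrite last_rcons => hb; case: nz.
rewrite last_rcons => /walk_rcons [wp [_ [anz lp]]] av.
case/lastP: q => [|q b]; first by move=> _ /= v0; case: anz; rewrite av v0.
move=> /walk_rcons [wq [_ [_ lq]]]; rewrite last_rcons => bv.
have ab : a = b by rewrite av bv.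
rewrite -ab; congr rcons; apply: (IH q (f a) wp lp wq); by rewrite lq ab.
Qed.

Lemma tree : rooted_tree (pretail_V f 0) (rev_rel (pretail_E f 0)) 0.
Proof.
split.
- by exists 0%N; split.
- move=> u v [hv [nz ->]]; split=> //; exact: L2 hv nz.
- move=> v hv; split.
    case: hv => j [h1 h2]; elim: j v h1 h2 => [|j IH] v h1 h2.
      by exists [::]; rewrite /= in h1 *.
    have [p [hp lp]] : exists p, walk (rev_rel (pretail_E f 0)) 0 p /\ last 0 p = f v.
      apply: IH; first by rewrite -iterSr.
      by move=> i lt; rewrite -iterSr; apply: h2.
    exists (rcons p v); rewrite last_rcons; split=> //.
    apply/walk_rcons; split=> //; split; first by exists j.+1.
    split=> //; move=> v0; apply: (h2 0%N isT); rewrite /= v0; exact: per0.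
  move=> p q; exact: uniq_walk.
Qed.

Lemma iter_inj j : injective f -> injective (iter j f).
Proof. by move=> fi; elim: j => //= j IH x y /fi /IH. Qed.

Lemma bij_part : (forall x, pretail_V f 0 x <-> x = 0) <-> bijective f.
Proof.
split=> [H|/bij_inj fi x].
  apply: injF_bij => x y fxy.
  have fa : f (x - y) = 0 by rewrite fB fxy subrr.
  case: (eqVneq (x - y) 0) => [/subr0_eq //|anz].
  suff : pretail_V f 0 (x - y) by move/H => h; rewrite h eqxx in anz.
  exists 1%N; split=> // i; rewrite ltnS leqn0 => /eqP -> /=.
  move/perE; rewrite /E; case: e epos => [//|e'] _.
  rewrite iterSr fa it0 => h; by rewrite -h eqxx in anz.
split=> [[j [h1 _]]|->]; last by exists 0%N; split.
by apply: (@iter_inj j fi x 0); rewrite h1 it0.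
Qed.
End Main.

Theorem gen_main :
  (forall y, periodic f y -> digraph_iso (pretail_V f y) (pretail_E f y) (pretail_V f 0) (pretail_E f 0))
  /\ rooted_tree (pretail_V f 0) (rev_rel (pretail_E f 0)) 0
  /\ ((forall x, pretail_V f 0 x <-> x = 0) <-> bijective f).
Proof.
have [e [epos He]] := idem_pow.
split; last split.
- by move=> y /(perE epos He) Py; exact: (iso epos He Py).
- exact: (tree epos He).
- exact: (bij_part epos He).
Qed.
End Gen.

Definition ptS d n := pt d n.+1.
HB.instance Definition _ d n := Finite.copy (ptS d n) {ffun 'I_d -> 'I_n.+1}.
HB.instance Definition _ d n := GRing.Zmodule.copy (ptS d n) {ffun 'I_d -> 'I_n.+1}.

Section Conc.
Variable n' : nat.
Hypothesis hn : (0 < n'.+1)%N.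
Local Notation N := n'.+1.

Definition phi (z : int) : 'I_N := Ordinal (ltn_pmod (absz (z %% N%:Z))%Z hn).

Lemma phi_val z : ((phi z : nat)%:Z = z %% N%:Z)%Z.
Proof. rewrite /= -[RHS]modz_mod; move: (z %% N%:Z)%Z (@modz_ge0 z N%:Z isT) => [k|k] // _; by rewrite modz_nat. Qed.

Lemma phi_eq z1 z2 : (z1 %% N%:Z = z2 %% N%:Z)%Z -> phi z1 = phi z2.
Proof. by move=> h; apply: val_inj; rewrite /= h. Qed.

Lemma phiD a b : phi (a + b) = phi a + phi b.
Proof.
apply/val_inj/eqP; rewrite -eqz_nat phi_val; apply/eqP.
have -> : Posz (((phi a + phi b)%R : 'I_N) : nat) = Posz ((((phi a : nat) + (phi b : nat))%N %% N)%N) by [].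
by rewrite -modz_nat PoszD !phi_val modzDm.
Qed.

Lemma phi0 : phi 0 = 0.
Proof. by apply: val_inj. Qed.

Lemma phi_sum d (F : 'I_d -> int) : phi (\sum_j F j) = \sum_j phi (F j).
Proof. exact: (big_morph phi phiD phi0). Qed.

Lemma Mmap_add d (M : 'M[int]_d) (x y : ptS d n') :
  Mmap hn M (x + y) = Mmap hn M x + Mmap hn M y.
Proof.
apply/ffunP => i; rewrite !ffunE.
change (phi (\sum_j M i j * (((x + y)%R j : 'I_N) : nat)%:Z) =
  phi (\sum_j M i j * ((x j : 'I_N) : nat)%:Z) + phi (\sum_j M i j * ((y j : 'I_N) : nat)%:Z)).
rewrite !phi_sum -big_split /=.
apply: eq_bigr => j _.
rewrite -phiD; apply: phi_eq.
rewrite ffunE.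
have -> : Posz (((x j + y j)%R : 'I_N) : nat) = (((x j : nat) + (y j : nat))%N %% N)%N by [].
by rewrite -modz_nat modzMmr PoszD mulrDr.
Qed.
End Conc.

Local Close Scope ring_scope.

Theorem corollary3p3 (d n : nat) (hn : 0 < n) (M : 'M[int]_d) :
  let f := Mmap hn M in
  let o := pt0 d hn in
  (forall y : pt d n, periodic f y ->
     digraph_iso (pretail_V f y) (pretail_E f y) (pretail_V f o) (pretail_E f o))
  /\ rooted_tree (pretail_V f o) (rev_rel (pretail_E f o)) o
  /\ ((forall x, pretail_V f o x <-> x = o) <-> bijective f).
Proof.
case: n hn M => [//|n'] hn M f o.
have o0 : o = (0%R : ptS d n') by apply/ffunP => i; rewrite !ffunE; apply: val_inj.
rewrite o0.
exact: (@gen_main (ptS d n') f (@Mmap_add n' hn d M)).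
Qed.
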